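(* Let $\mathfrak S$ be a controlled Markov process and $\mathcal G$ its induced abstract $2\frac12$-player game graph (as described in the context). Let $U\subseteq V_0$, let $v\in U$, and let $\pi_0$ be a deterministic memoryless strategy of Player 0 such that $\inf_{\pi_1}P_v^{\pi_0,\pi_1}(\mathcal G\models\square U)=1$, where the infimum ranges over all strategies $\pi_1$ of Player 1. Then the refinement $\rho$ of $\pi_0$ ensures $P_s^{\rho}(\mathfrak S\models\square Q^{-1}(U))=1$ for every state $s\in v$.
   Context: CMP: $\mathfrak S=(\mathcal S,\mathcal U,T_{\mathfrak s})$ with $\mathcal S$ a Borel space, $\mathcal U$ finite, and $T_{\mathfrak s}(\cdot\mid s,u)$ a probability measure on the Borel sets of $\mathcal S$. A stationary policy is a universally measurable $\rho:\mathcal S\to\mathcal U$; $P_s^\rho$ is the induced measure on infinite paths from $s$ with $s^{k+1}\sim T_{\mathfrak s}(\cdot\mid s^k,\rho(s^k))$. $\mathcal P=\langle B_1,\dots,B_\ell\rangle$ is a given partition of $\mathcal S$ into measurable sets. Abstraction: $\widehat{\mathcal S}$ is a finite partition of $\mathcal S$ into nonempty (measurable) cells each contained in a single $B_i$. $Q:\mathcal S\to\widehat{\mathcal S}$ maps $s$ to its cell; $Q^{-1}(\widehat U)=\bigcup_{\widehat s\in\widehat U}\widehat s$. Functions $\overline F,\underline F:\widehat{\mathcal S}\times\mathcal U\to2^{\widehat{\mathcal S}}$ satisfy $\overline F(\widehat s,u)\supseteq\{\widehat s'\mid\exists s\in\widehat s.\ T_{\mathfrak s}(\widehat s'\mid s,u)>0\}$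 and $\underline F(\widehat s,u)\subseteq\{\widehat s'\mid\exists\varepsilon>0\ \forall s\in\widehat s.\ T_{\mathfrak s}(\widehat s'\mid s,u)\ge\varepsilon\}$. Game graph $\mathcal G=\langle V,E,\langle V_0,V_1,V_r\rangle\rangle$: $V_0=\widehat{\mathcal S}$, $V_1=\widehat{\mathcal S}\times\mathcal U$, $V_r=\bigcup_{v_1\in V_1}V_r(v_1)$ with $V_r(v_1)=\{v_r\subseteq\widehat{\mathcal S}\mid\underline F(v_1)\subseteq v_r\subseteq\overline F(v_1),\ 1\le|v_r|\le|\underline F(v_1)|+1\}$; $E(v_0)=\{(v_0,u)\mid u\in\mathcal U\}$, $E(v_1)=V_r(v_1)$, $E(v_r)=\{v_0\in V_0\mid v_0\in v_r\}$. Player 0 moves at $V_0$, Player 1 at $V_1$, and at $V_r$ the successor is uniformly random. Strategies $\pi_i:V^*V_i\to\mathit{Dist}(V)$ are supported on successors; a deterministic memoryless Player 0 strategy assigns each $v_0$ a single successor $\pi_0(v_0)=(v_0,u)$. $P_v^{\pi_0,\pi_1}$ is the induced measure on runs. A run of $\mathcal G$ satisfies a specification over $V_0$ (such as $\square U$: always in $U$) iff its projection onto its subsequence of $V_0$-vertices does. Refinement: the refinement of a deterministic memoryless $\pi_0$ is $\rho$ with $\rho(s)=u$ whenever $s\in\widehat s$ and $\pi_0(\widehat s)=(\widehat s,u)$. *)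

(* Defs.v *)
From HB Require Import structures.
From mathcomp Require Import all_boot all_order all_algebra.
From mathcomp Require Import all_classical all_reals all_analysis measurable_realfun.
Set Implicit Arguments. Unset Strict Implicit. Unset Printing Implicit Defensive.
Import Order.TTheory GRing.Theory Num.Theory.
Local Open Scope classical_set_scope.
Local Open Scope ring_scope.

Definition is_stoch_kernel (d : measure_display) (S : measurableType d)
  (R : realType) (Act : finType) (T : S -> Act -> probability S R) : Prop :=
  forall (u : Act) (A : set S), measurable A ->
    measurable_fun [set: S] (fun s => T s u A).

(* cmp_stay T rho A n s = P_s^rho(s^0, ..., s^n all lie in A): the       *)
(* probability of the cylinder event "the first n+1 states are in A"   *)
(* under the path measure induced by the stationary policy rho, given   *)
(* by the standard iterated-kernel (Ionescu-Tulcea) formula.            *)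
Fixpoint cmp_stay (d : measure_display) (S : measurableType d)
  (R : realType) (Act : finType) (T : S -> Act -> probability S R)
  (rho : S -> Act) (A : set S) (n : nat) (s : S) : \bar R :=
  match n with
  | 0 => (\1_A s)%:E
  | n'.+1 => ((\1_A s)%:E *
      \int[T s (rho s)]_(x in [set: S]) cmp_stay T rho A n' x)%E
  end.

(* P_s^rho(S |= [] A): the measure of the event "always in A", i.e. of  *)
(* the decreasing intersection of the cylinder events above, which by   *)
(* continuity from above is the infimum of their probabilities.        *)
Definition cmp_always (d : measure_display) (S : measurableType d)
  (R : realType) (Act : finType) (T : S -> Act -> probability S R)
  (rho : S -> Act) (A : set S) (s : S) : \bar R :=
  ereal_inf [set cmp_stay T rho A n s | n in [set: nat]].

Definition cell (d : measure_display) (S : measurableType d) (Shat : finType)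
  (Q : S -> Shat) (c : Shat) : set S := Q @^-1` [set c].

Definition Qinv (d : measure_display) (S : measurableType d) (Shat : finType)
  (Q : S -> Shat) (U : {set Shat}) : set S := [set s | Q s \in U].

Definition is_meas_partition (d : measure_display) (S : measurableType d)
  (l : nat) (B : 'I_l -> set S) : Prop :=
  (forall i, measurable (B i)) /\
  (forall i j, i != j -> B i `&` B j = set0) /\
  (forall s, exists i, B i s).

Definition is_abstraction (d : measure_display) (S : measurableType d)
  (Shat : finType) (l : nat) (B : 'I_l -> set S) (Q : S -> Shat) : Prop :=
  (forall c, measurable (cell Q c)) /\
  (forall c, exists s, Q s = c) /\
  (forall c, exists i, cell Q c `<=` B i).

Definition over_approx (d : measure_display) (S : measurableType d)
  (R : realType) (Act Shat : finType) (T : S -> Act -> probability S R)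
  (Q : S -> Shat) (Fbar : Shat -> Act -> {set Shat}) : Prop :=
  forall (c : Shat) (u : Act) (c' : Shat),
    (exists s, Q s = c /\ (0 < T s u (cell Q c'))%E) -> c' \in Fbar c u.

Definition under_approx (d : measure_display) (S : measurableType d)
  (R : realType) (Act Shat : finType) (T : S -> Act -> probability S R)
  (Q : S -> Shat) (Fund : Shat -> Act -> {set Shat}) : Prop :=
  forall (c : Shat) (u : Act) (c' : Shat), c' \in Fund c u ->
    exists eps : R, 0 < eps /\
      forall s, Q s = c -> (eps%:E <= T s u (cell Q c'))%E.

Inductive vertex (Shat Act : finType) : Type :=
  | V0v of Shat
  | V1v of Shat * Act
  | Vrv of {set Shat}.

Definition in_Vr (Shat Act : finType) (Fbar Fund : Shat -> Act -> {set Shat})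
  (c : Shat) (u : Act) (vr : {set Shat}) : bool :=
  [&& Fund c u \subset vr, vr \subset Fbar c u,
      0 < #|vr| & #|vr| <= #|Fund c u|.+1]%N.

(* A Player-1 strategy maps each history in V^* V_1 (a sequence of      *)
(* vertices ending in V1v (c,u)) to a probability distribution over V   *)
(* supported on the successors E((c,u)) = V_r(c,u); such a distribution *)
(* is represented by its (finitely supported) mass function on the     *)
(* V_r-vertices, i.e. on {set Shat}.                                    *)
Definition p1_strategy (R : realType) (Shat Act : finType) :=
  seq (vertex Shat Act) -> {set Shat} -> R.

Definition valid_p1 (R : realType) (Shat Act : finType)
  (Fbar Fund : Shat -> Act -> {set Shat}) (pi1 : p1_strategy R Shat Act) : Prop :=
  forall (h : seq (vertex Shat Act)) (c : Shat) (u : Act),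
    let hv := rcons h (V1v (c, u)) in
    (forall vr, 0 <= pi1 hv vr) /\
    (\sum_(vr : {set Shat}) pi1 hv vr = 1) /\
    (forall vr, pi1 hv vr != 0 -> in_Vr Fbar Fund c u vr).

(* game_stay pi0 pi1 U n h c = probability, when the play has history h *)
(* and is currently at the V0-vertex c, that the current and the next n *)
(* V0-vertices all lie in U.  Player 0 plays the deterministic          *)
(* memoryless strategy c |-> (c, pi0 c); Player 1 plays pi1; at a V_r   *)
(* vertex vr the successor is uniform on the members of vr.             *)
Fixpoint game_stay (R : realType) (Shat Act : finType) (pi0 : Shat -> Act)
  (pi1 : p1_strategy R Shat Act) (U : {set Shat}) (n : nat)
  (h : seq (vertex Shat Act)) (c : Shat) : R :=
  if c \in U then
    match n with
    | 0 => 1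
    | n'.+1 =>
        let h1 := rcons (rcons h (V0v Act c)) (V1v (c, pi0 c)) in
        \sum_(vr : {set Shat})
          pi1 h1 vr * (#|vr|%:R)^-1 *
          \sum_(c' in vr) game_stay pi0 pi1 U n' (rcons h1 (Vrv Act vr)) c'
    end
  else 0.

(* P_v^{pi0,pi1}(G |= [] U): measure of the event that all V0-vertices  *)
(* of the run lie in U, i.e. the infimum of the probabilities of the    *)
(* decreasing cylinder events "the first n+1 V0-vertices lie in U".     *)
Definition game_always (R : realType) (Shat Act : finType) (pi0 : Shat -> Act)
  (pi1 : p1_strategy R Shat Act) (U : {set Shat}) (v : Shat) : \bar R :=
  ereal_inf [set (game_stay pi0 pi1 U n [::] v)%:E | n in [set: nat]].

Definition refinement (d : measure_display) (S : measurableType d)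
  (Shat Act : finType) (Q : S -> Shat) (pi0 : Shat -> Act) : S -> Act :=
  fun s => pi0 (Q s).

(* Main.v *)
Require Import Defs.
From HB Require Import structures.
From mathcomp Require Import all_boot all_order all_algebra.
From mathcomp Require Import all_classical all_reals all_analysis measurable_realfun.
Import Order.TTheory GRing.Theory Num.Theory.
Local Open Scope classical_set_scope.
Local Open Scope ring_scope.

Lemma game_stay_bound (R : realType) (Shat Act : finType) (Fbar Fund : Shat -> Act -> {set Shat})
  (pi0 : Shat -> Act) (pi1 : p1_strategy R Shat Act) (U : {set Shat}) :
  valid_p1 Fbar Fund pi1 ->
  forall n h c, 0 <= game_stay pi0 pi1 U n h c <= 1.
Proof.
move=> V; elim=> [|n IH] h c /=; case: ifP => _ //=; rewrite ?lexx ?ler01 //.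
have [p0 [p1 _]] := V (rcons h (V0v Act c)) c (pi0 c).
set h1 := rcons _ _.
apply/andP; split.
  apply: sumr_ge0 => vr _; apply: mulr_ge0; first by apply: mulr_ge0 => //; rewrite invr_ge0.
  by apply: sumr_ge0 => c' _; case/andP: (IH (rcons h1 (Vrv Act vr)) c').
rewrite -[X in _ <= X]p1; apply: ler_sum => vr _; rewrite -mulrA; apply: ler_piMr => //.
have HS : \sum_(c' in vr) game_stay pi0 pi1 U n (rcons h1 (Vrv Act vr)) c' <= #|vr|%:R.
  rewrite -sum1_card natr_sum; apply: ler_sum => c' _.
  by case/andP: (IH (rcons h1 (Vrv Act vr)) c').
have [->|nz] := eqVneq #|vr| 0%N; first by rewrite invr0 mul0r ler01.
rewrite ler_pdivrMl ?mulr1 //; by rewrite ltr0n lt0n.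
Qed.

Lemma game_stay_shift (R : realType) (Shat Act : finType)
  (pi0 : Shat -> Act) (P P' : p1_strategy R Shat Act) (U : {set Shat}) (h2 : seq (vertex Shat Act)) :
  (forall x, (0 < size x)%N -> P' (h2 ++ x) = P x) ->
  forall n g c, game_stay pi0 P' U n (h2 ++ g) c = game_stay pi0 P U n g c.
Proof.
move=> HP; elim=> [|n IH] g c //=; case: ifP => _ //.
rewrite !rcons_cat; apply: eq_bigr => vr _.
rewrite HP; last by rewrite size_rcons.
congr (_ * _); apply: eq_bigr => c' _; by rewrite rcons_cat IH.
Qed.

Lemma avg_one (R : realType) (Shat : finType) (F : Shat -> R) (vr : {set Shat}) c' :
  c' \in vr -> (forall c, c \in vr -> F c <= 1) ->
  (#|vr|%:R)^-1 * \sum_(c in vr) F c = 1 -> F c' = 1.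
Proof.
move=> cin F1 E.
have nz : (#|vr|%:R : R) != 0 by rewrite pnatr_eq0 -lt0n card_gt0; apply/set0Pn; exists c'.
have ES : \sum_(c in vr) F c = #|vr|%:R.
  by move: E; rewrite mulrC => /(congr1 (fun x => x * #|vr|%:R)); rewrite mulfVK // mul1r.
have E0 : \sum_(c in vr) (1 - F c) = 0.
  by rewrite sumrB ES -sum1_card natr_sum subrr.
have H : forall i, i \in vr -> 1 - F i = 0.
  apply: (psumr_eq0P _ E0) => i /F1; by rewrite subr_ge0.
 apply/eqP; rewrite -subr_eq0 -opprB oppr_eq0; apply/eqP; exact: H.
Qed.

Definition good (R : realType) (Shat Act : finType) (Fbar Fund : Shat -> Act -> {set Shat})
  (pi0 : Shat -> Act) (U : {set Shat}) (c : Shat) : Prop :=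
  forall pi1 : p1_strategy R Shat Act, valid_p1 Fbar Fund pi1 ->
    forall n, game_stay pi0 pi1 U n [::] c = 1.
Arguments good R {Shat Act}.

Lemma good_closed (R : realType) (Shat Act : finType) (Fbar Fund : Shat -> Act -> {set Shat})
  (pi0 : Shat -> Act) (U : {set Shat}) (pi10 : p1_strategy R Shat Act) :
  valid_p1 Fbar Fund pi10 ->
  (forall c u, Fund c u \subset Fbar c u) ->
  forall c c', c' \in Fbar c (pi0 c) ->
  good R Fbar Fund pi0 U c -> good R Fbar Fund pi0 U c'.
Proof.
move=> V0 HF c c' c'F gc pi1 V1 n.
pose vr0 : {set Shat} := (c' |: Fund c (pi0 c))%SET.
pose h1 := [:: V0v Act c; V1v (c, pi0 c)].
pose h2 := rcons h1 (Vrv Act vr0).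
pose pi1' : p1_strategy R Shat Act := fun g vr =>
  if `[< g = h1 >] then (vr == vr0)%:R
  else if (3 < size g)%N then pi1 (drop 3 g) vr else pi10 g vr.
have vr0V : in_Vr Fbar Fund c (pi0 c) vr0.
  rewrite /in_Vr /vr0; apply/and4P; split.
  - exact: finset.subsetUr.
  - by rewrite finset.subUset finset.sub1set c'F HF.
  - by rewrite card_gt0; apply/set0Pn; exists c'; rewrite setU11.
  - by rewrite cardsU1; case: (c' \notin _).
have V' : valid_p1 Fbar Fund pi1'.
  move=> h c0 u /=; rewrite /pi1'.
  case: asboolP => [Eh|_].
    have [Ec Eu] : c0 = c /\ u = pi0 c.
      have := congr1 (last (V0v Act c)) Eh; rewrite last_rcons /=.
      by case=> ->.
    subst c0 u; split; first by move=> vr; rewrite ler0n.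
    split; first by rewrite (bigD1 vr0) //= eqxx big1 ?addr0 // => vr /negbTE ->.
    move=> vr; have [->//|ne] := eqVneq vr vr0; by rewrite /= eqxx.
  case Hs: (3 < size (rcons h (V1v (c0, u))))%N; last exact: V0.
  rewrite drop_rcons; last by move: Hs; rewrite size_rcons.
  exact: V1.
have E := gc pi1' V' n.+1.
move: E => /=.
have cU : c \in U.
  have := gc pi10 V0 0%N => /=; case: ifP => // _ /eqP; rewrite eq_sym oner_eq0.
  by [].
rewrite cU.
rewrite (bigD1 vr0) //= [X in _ + X]big1 ?addr0; last first.
  by move=> vr Hvr; rewrite /pi1'; case: asboolP => // _; rewrite (negbTE Hvr) !mul0r.
rewrite /pi1'; case: asboolP => // _; rewrite eqxx mul1r.
have Hsh : forall c'', game_stay pi0 pi1' U n [:: V0v Act c; V1v (c, pi0 c); Vrv Act vr0] c''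
                      = game_stay pi0 pi1 U n [::] c''.
  move=> c''; rewrite -[[:: _; _; _]]cats0; apply: game_stay_shift => x Hx.
  rewrite /pi1'; case: asboolP => [/(congr1 size)|_].
    by rewrite size_cat; move: Hx; case: x.
  by case: x Hx => [//|a x] _ /=; rewrite ?drop0.
under eq_bigr => c'' _ do rewrite Hsh.
apply: avg_one; first by rewrite setU11.
move=> c2 _; by case/andP: (@game_stay_bound R Shat Act Fbar Fund pi0 pi1 U V1 n [::] c2).
Qed.
Lemma le_integral_nn d (T : measurableType d) (R : realType)
  (mu : {measure set T -> \bar R}) (D : set T) (f g : T -> \bar R) :
  (forall x, D x -> (0 <= f x)%E) -> (forall x, D x -> (f x <= g x)%E) ->
  (\int[mu]_(x in D) f x <= \int[mu]_(x in D) g x)%E.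
Proof.
move=> f0 fg.
have g0 : forall x, D x -> (0 <= g x)%E by move=> x Dx; exact: le_trans (f0 _ Dx) (fg _ Dx).
rewrite !ge0_integralE //.
apply: ge_ereal_sup => _ [h hf <-]; apply: ereal_sup_ubound; exists h => //= x.
apply: le_trans (hf x) _; rewrite /patch; case: ifP => // /set_mem Dx; exact: fg.
Qed.

Lemma bigcup_cells d (S : measurableType d) (Shat : finType) (Q : S -> Shat) (r : seq Shat) :
  \big[setU/set0]_(c <- r) cell Q c = [set x | Q x \in r].
Proof.
elim: r => [|c r IH].
  rewrite big_nil; apply/seteqP; split => x //=.
rewrite big_cons IH; apply/seteqP; split => x /=.
  rewrite /cell /= in_cons; case=> [->|->]; by rewrite ?eqxx ?orbT.
rewrite /cell /= in_cons => /orP[/eqP ->|H]; [by left|by right].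
Qed.

Theorem proposition1 (d : measure_display) (S : measurableType d)
  (R : realType) (Act Shat : finType)
  (T : S -> Act -> probability S R)
  (l : nat) (B : 'I_l -> set S)
  (Q : S -> Shat) (Fbar Fund : Shat -> Act -> {set Shat})
  (U : {set Shat}) (v : Shat) (pi0 : Shat -> Act) :
  is_stoch_kernel T ->
  is_meas_partition B ->
  is_abstraction B Q ->
  over_approx T Q Fbar ->
  under_approx T Q Fund ->
  v \in U ->
  ereal_inf [set game_always pi0 pi1 U v
            | pi1 in [set p : p1_strategy R Shat Act | valid_p1 Fbar Fund p]]
    = 1%E ->
  forall s : S, Q s = v ->
    cmp_always T (refinement Q pi0) (Qinv Q U) s = 1%E.
Proof.
move=> Hk HB [Hcm [Hne Hsub]] Hover Hunder vU Hinf.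
have [pi10 V0] : exists pi1 : p1_strategy R Shat Act, valid_p1 Fbar Fund pi1.
  apply: contrapT => /forallNP H.
  have E : [set game_always pi0 pi1 U v
            | pi1 in [set p : p1_strategy R Shat Act | valid_p1 Fbar Fund p]] = set0.
    apply/seteqP; split; last exact: sub0set.
    by move=> x [p Vp _]; exact: H p Vp.
  by move: Hinf; rewrite E ereal_inf0.
have HF : forall c u, Fund c u \subset Fbar c u.
  move=> c u; apply/fintype.subsetP => c' /Hunder [eps [eps0 H]].
  have [s Qs] := Hne c.
  apply: Hover; exists s; split => //.
  by apply: lt_le_trans (H s Qs); rewrite lte_fin.
pose W : {set Shat} := finset.finset (fun c => `[< good R Fbar Fund pi0 U c >]).
have inW c : (c \in W) = `[< good R Fbar Fund pi0 U c >] by rewrite finset.inE.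
have goodW c : c \in W -> good R Fbar Fund pi0 U c by rewrite inW => /asboolP.
have WU c : c \in W -> c \in U.
  move/goodW => g; have := g pi10 V0 0%N; rewrite /=; case: ifP => // _ /eqP.
  by rewrite eq_sym oner_eq0.
have vW : v \in W.
  rewrite inW; apply/asboolP => pi1 V1 n.
  have H1 : (1 <= game_always pi0 pi1 U v)%E.
    by rewrite -Hinf; apply: ereal_inf_lbound; exists pi1.
  have H2 : (game_always pi0 pi1 U v <= (game_stay pi0 pi1 U n [::] v)%:E)%E.
    by apply: ereal_inf_lbound; exists n.
  have := le_trans H1 H2; rewrite lee_fin => H3.
  apply/le_anti; rewrite H3 andbT.
  by case/andP: (@game_stay_bound R Shat Act Fbar Fund pi0 pi1 U V1 n [::] v).
have Wcl c c' : c \in W -> c' \in Fbar c (pi0 c) -> c' \in W.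
  move=> cW c'F; rewrite inW; apply/asboolP; exact: (@good_closed R Shat Act Fbar Fund pi0 U pi10 V0 HF c c' c'F (goodW c cW)).
pose rho := refinement Q pi0.
have EQW : Qinv Q W = ~` \big[setU/set0]_(c <- enum (~: W)) cell Q c.
  rewrite bigcup_cells; apply/seteqP; split => x /=; rewrite /Qinv /= mem_enum finset.in_setC.
    by move=> ->.
  by move/negP; rewrite negbK.
have mU : measurable (\big[setU/set0]_(c <- enum (~: W)) cell Q c).
  by apply: bigsetU_measurable => c _; exact: Hcm.
have mQW : measurable (Qinv Q W) by rewrite EQW; exact: measurableC.
have TQW s : Q s \in W -> T s (rho s) (Qinv Q W) = 1%E.
  move=> sW; rewrite EQW probability_setC //.
  suff -> : T s (rho s) (\big[setU/set0]_(c <- enum (~: W)) cell Q c) = 0%E by rewrite sube0.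
  have : forall r : seq Shat, (forall c, c \in r -> c \notin W) ->
      T s (rho s) (\big[setU/set0]_(c <- r) cell Q c) = 0%E.
    elim => [|c r IH] H; first by rewrite big_nil measure0.
    rewrite big_cons null_set_setU //.
    - by apply: bigsetU_measurable => c' _; exact: Hcm.
    - apply/eqP; rewrite eq_le measure_ge0 andbT leNgt; apply/negP => pos.
      have cF := Hover (Q s) (pi0 (Q s)) c (ex_intro _ s (conj erefl pos)).
      by have := H c (mem_head _ _); rewrite (Wcl _ _ sW cF).
    - by apply: IH => c' c'r; apply: H; rewrite in_cons c'r orbT.
  by apply => c; rewrite mem_enum finset.in_setC.
have I1 : forall (x : S) (f : S -> \bar R), (forall y, 0 <= f y <= 1)%E ->
    (\int[T x (rho x)]_(y in setT) f y <= 1)%E.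
  move=> x f Hf.
  apply: (@le_trans _ _ (\int[T x (rho x)]_(y in setT) (\1_setT y)%:E)%E).
    apply: le_integral_nn => y _; first by case/andP: (Hf y).
    by rewrite indicT /=; case/andP: (Hf y).
  by rewrite integral_indic // setIT; apply: probability_le1.
have bnd : forall n x, (0 <= cmp_stay T rho (Qinv Q U) n x <= 1)%E.
  elim => [|n IH] x /=.
    by rewrite indicE; case: (_ \in _); rewrite /= !lee_fin ?lexx ?ler01.
  have I0 : (0 <= \int[T x (rho x)]_(y in setT) cmp_stay T rho (Qinv Q U) n y)%E.
    by apply: integral_ge0 => y _; case/andP: (IH y).
  rewrite indicE; case: (_ \in _); rewrite ?mul1e ?mul0e ?lexx ?lee01 //.
  by rewrite I0 I1.
have main : forall n x, Q x \in W -> cmp_stay T rho (Qinv Q U) n x = 1%E.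
  elim => [|n IH] x xW /=.
    by rewrite indicE mem_set //; exact: WU.
  rewrite indicE mem_set ?mul1e; last exact: WU.
  apply/le_anti/andP; split; first by apply: I1.
  rewrite -(TQW x xW) -[Qinv Q W]setIT -integral_indic //.
  apply: le_integral_nn => y _; first by rewrite lee_fin.
  rewrite indicE; have [H|H] := boolP (y \in Qinv Q W).
    by rewrite IH //; exact: (set_mem H).
  by case/andP: (bnd n y).
move=> s Qs; rewrite /cmp_always; apply/le_anti/andP; split.
  by apply: ereal_inf_lbound; exists 0%N => //; rewrite main // Qs.
by apply: le_ereal_inf_tmp => _ [n _ <-]; rewrite main // Qs.
Qed.
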